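(* Let $G,D\subsetneq\mathbb{R}^n$ be domains, and let $f:G\to D$ be a surjective mapping and $L\ge1$ such that \[ b_{G,\infty}(z_1,z_2)/L\le b_{D,\infty}(f(z_1),f(z_2))\le L\,b_{G,\infty}(z_1,z_2)\quad\text{for all } z_1,z_2\in G. \] Then $f$ is a quasiconformal homeomorphism (either sense-preserving or sense-reversing), and its linear dilatation satisfies $H_f(z)\le 4L^2$ for all $z\in G$.
   Context: For a domain $G\subsetneq\mathbb{R}^n$ and $z_1,z_2\in G$, $b_{G,\infty}(z_1,z_2)=\sup_{w\in\partial G}\frac{|z_1-z_2|}{\max\{|z_1-w|,|z_2-w|\}}$. For a homeomorphism $f$ and $z\in G$, the linear dilatation is $H_f(z)=\limsup_{r\to0}\frac{L_f(z,r)}{l_f(z,r)}$, where $L_f(z,r)=\sup\{|f(z_1)-f(z)|:|z_1-z|=r\}$ and $l_f(z,r)=\inf\{|f(z_1)-f(z)|:|z_1-z|=r\}$. *)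

(* Defs.v *)
From HB Require Import structures.
From mathcomp Require Import all_boot all_order all_algebra.
From mathcomp Require Import all_classical all_reals all_analysis.
Set Implicit Arguments. Unset Strict Implicit. Unset Printing Implicit Defensive.
Import Order.TTheory GRing.Theory Num.Theory.
Import numFieldNormedType.Exports.
Local Open Scope classical_set_scope.
Local Open Scope ring_scope.

Section Defs.
Variables (R : realType) (n : nat).
Notation V := 'rV[R]_n.

(* Euclidean norm and distance on R^n (MathComp's own norm on 'rV is the sup norm). *)
Definition enorm (x : V) : R := Num.sqrt (\sum_(i < n) x ord0 i ^+ 2).
Definition edist (x y : V) : R := enorm (x - y).

(* A domain: nonempty, open, connected (the topology on 'rV is the product
   topology, which coincides with the Euclidean one). *)
Definition domain (G : set V) : Prop := G !=set0 /\ open G /\ connected G.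

Definition bdry (G : set V) : set V := closure G `\` interior G.

Definition b_infty (G : set V) (z1 z2 : V) : \bar R :=
  ereal_sup [set ((edist z1 z2) / Num.max (edist z1 w) (edist z2 w))%:E
            | w in bdry G].

Definition Lf (f : V -> V) (z : V) (r : R) : \bar R :=
  ereal_sup [set (edist (f z1) (f z))%:E | z1 in [set z1 | edist z1 z = r]].
Definition lf (f : V -> V) (z : V) (r : R) : \bar R :=
  ereal_inf [set (edist (f z1) (f z))%:E | z1 in [set z1 | edist z1 z = r]].

Definition Hf (f : V -> V) (z : V) : \bar R :=
  limf_esup (fun r => (Lf f z r / lf f z r)%E) (0%R : R)^'+.

Definition homeo_onto (f : V -> V) (G D : set V) : Prop :=
  {within G, continuous f} /\ f @` G = D /\
  exists g : V -> V, {within D, continuous g} /\ g @` D = G /\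
    (forall x, G x -> g (f x) = x) /\ (forall y, D y -> f (g y) = y).

Definition quasiconformal (f : V -> V) (G D : set V) : Prop :=
  homeo_onto f G D /\ exists H : R, forall z, G z -> (Hf f z <= H%:E)%E.

End Defs.

(* Main.v *)
Require Import Defs.
From HB Require Import structures.
From mathcomp Require Import all_boot all_order all_algebra.
From mathcomp Require Import all_classical all_reals all_analysis.
From mathcomp.algebra_tactics Require Import ring lra.
Set Implicit Arguments. Unset Strict Implicit. Unset Printing Implicit Defensive.
Import Order.TTheory GRing.Theory Num.Theory.
Import numFieldNormedType.Exports.
Local Open Scope classical_set_scope.
Local Open Scope ring_scope.

Section Norms.
Variables (R : realType) (n : nat).
Notation V := 'rV[R]_n.
Implicit Types x y z : V.

Definition sq x := \sum_(i < n) x ord0 i ^+ 2.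
Lemma sq_ge0 x : 0 <= sq x.
Proof. by apply: sumr_ge0 => i _; rewrite sqr_ge0. Qed.
Lemma enormE x : enorm x = Num.sqrt (sq x). Proof. by []. Qed.
Lemma enorm_ge0 x : 0 <= enorm x. Proof. exact: sqrtr_ge0. Qed.
Lemma enorm_sq x : enorm x ^+ 2 = sq x.
Proof. by rewrite enormE sqr_sqrtr // sq_ge0. Qed.
Lemma enormN x : enorm (- x) = enorm x.
Proof. by rewrite !enormE /sq; congr Num.sqrt; apply: eq_bigr => i _; rewrite mxE sqrrN. Qed.
Lemma edistC x y : Defs.edist x y = Defs.edist y x.
Proof. by rewrite /Defs.edist -enormN opprB. Qed.
Lemma comp_le_enorm x i : `|x ord0 i| <= enorm x.
Proof.
rewrite -(ler_pXn2r (isT : (0 < 2)%N)) ?nnegrE ?enorm_ge0 // enorm_sq real_normK ?num_real //.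
by rewrite /sq (bigD1 i) //= lerDl sumr_ge0 // => j _; rewrite sqr_ge0.
Qed.
Lemma comp_le_mx x i : `|x ord0 i| <= `|x|.
Proof.
rewrite (_ : `|x| = mx_norm x) // mx_normrE.
by apply: (le_bigmax _ (fun ij : 'I_1 * 'I_n => `|x ij.1 ij.2|) (ord0, i)).
Qed.
Lemma mx_le_enorm x : `|x| <= enorm x.
Proof.
rewrite (_ : `|x| = mx_norm x) // mx_normrE; apply/bigmax_leP; split; first exact: enorm_ge0.
by case=> i j _ /=; rewrite (ord1 i); exact: comp_le_enorm.
Qed.
Lemma enorm_le_mx x : enorm x <= n%:R * `|x|.
Proof.
rewrite -(ler_pXn2r (isT : (0 < 2)%N)) ?nnegrE ?enorm_ge0 ?mulr_ge0 // enorm_sq.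
rewrite /sq exprMn.
apply: (@le_trans _ _ (\sum_(i < n) `|x|^+2)).
  apply: ler_sum => i _; rewrite -real_normK ?num_real //; rewrite lerXn2r ?nnegrE //.
  exact: comp_le_mx.
rewrite sumr_const card_ord -[X in X <= _]mulr_natl ler_wpM2r ?sqr_ge0 //.
have h : (n <= n * n)%N by case: (n) => // m; rewrite leq_pmulr.
by rewrite -natrX ler_nat expnS expn1.
Qed.
Definition dot x y := \sum_(i < n) x ord0 i * y ord0 i.
Lemma sq_lin (t : R) x y : \sum_(i < n) (t * x ord0 i - y ord0 i) ^+ 2 =
  t ^+ 2 * sq x - 2 * t * dot x y + sq y.
Proof.
rewrite /sq /dot !mulr_sumr -sumrB -big_split /=; apply: eq_bigr => i _; ring.
Qed.
Lemma sqD x y : sq (x + y) = sq x + 2 * dot x y + sq y.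
Proof.
rewrite /sq /dot !mulr_sumr -!big_split /=; apply: eq_bigr => i _; rewrite mxE; ring.
Qed.
Lemma sq_eq0 x : sq x = 0 -> forall i, x ord0 i = 0.
Proof.
move=> /eqP; rewrite psumr_eq0 => [/allP h i|i _]; last exact: sqr_ge0.
by apply/eqP; rewrite -sqrf_eq0; apply: (implyP (h i (mem_index_enum _))).
Qed.
Lemma cauchy_schwarz x y : dot x y ^+ 2 <= sq x * sq y.
Proof.
have [a0|a0] := eqVneq (sq x) 0.
  have -> : dot x y = 0 by rewrite /dot big1 // => i _; rewrite sq_eq0 // mul0r.
  by rewrite expr0n /= mulr_ge0 // sq_ge0.
have apos : 0 < sq x by rewrite lt_neqAle eq_sym a0 sq_ge0.
have h : 0 <= \sum_(i < n) ((dot x y / sq x) * x ord0 i - y ord0 i) ^+ 2.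
  by apply: sumr_ge0 => i _; exact: sqr_ge0.
rewrite sq_lin in h.
have e : (dot x y / sq x) ^+ 2 * sq x - 2 * (dot x y / sq x) * dot x y + sq y
   = sq y - dot x y ^+ 2 / sq x by field; rewrite a0.
rewrite e subr_ge0 ler_pdivrMr // in h.
by rewrite mulrC.
Qed.
Lemma enormD x y : enorm (x + y) <= enorm x + enorm y.
Proof.
rewrite -(ler_pXn2r (isT : (0 < 2)%N)) ?nnegrE ?enorm_ge0 ?addr_ge0 ?enorm_ge0 //.
rewrite enorm_sq sqD sqrrD !enorm_sq lerD2r lerD2l -[X in _ <= X]mulr_natl ler_pM2l //.
apply: (le_trans (ler_norm (dot x y))).
rewrite -(ler_pXn2r (isT : (0 < 2)%N)) ?nnegrE ?mulr_ge0 ?enorm_ge0 //.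
by rewrite real_normK ?num_real // exprMn !enorm_sq cauchy_schwarz.
Qed.
Lemma edist_tri x y z : Defs.edist x z <= Defs.edist x y + Defs.edist y z.
Proof.
by rewrite /Defs.edist (_ : x - z = (x - y) + (y - z)) ?enormD // addrA subrK.
Qed.
Lemma enorm_eq0 x : enorm x = 0 -> x = 0.
Proof.
move=> h; have : sq x = 0 by rewrite -enorm_sq h expr0n.
move/sq_eq0 => hx; apply/matrixP => i j; rewrite (ord1 i) mxE; exact: hx.
Qed.
Lemma edist_gt0 x y : x <> y -> 0 < Defs.edist x y.
Proof.
move=> xy; rewrite lt_neqAle enorm_ge0 andbT eq_sym; apply/eqP => /enorm_eq0 /eqP.
by rewrite subr_eq0 => /eqP.
Qed.
Lemma edist_le_mx x y : `|x - y| <= Defs.edist x y. Proof. exact: mx_le_enorm. Qed.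

Lemma open_ball_e (G : set V) z : open G -> G z ->
  exists2 d : R, 0 < d & forall y, Defs.edist z y < d -> G y.
Proof.
move=> oG Gz; have : nbhs z G by move: oG; rewrite openE => /(_ z Gz).
move/nbhs_normP => [e e0 he]; exists e => // y hy; apply: he => /=.
exact: le_lt_trans (edist_le_mx z y) hy.
Qed.
Lemma bdry_notin (G : set V) w : open G -> bdry G w -> ~ G w.
Proof. by move=> oG [_ hw] Gw; apply: hw; move: oG; rewrite openE => /(_ w Gw). Qed.
Lemma bdry_ne (G : set V) : open G -> G !=set0 -> G != setT -> exists w, bdry G w.
Proof.
move=> oG [z Gz] GT; apply: contrapT => nb.
have clG : closed G.
  move=> y cy; apply: contrapT => nGy; apply: nb; exists y; split => //.
  by move=> iy; apply: nGy; exact: interior_subset.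
have [p nGp] : exists p, ~ G p.
  apply: contrapT => h; move/negP: GT; apply; apply/eqP/seteqP; split => // y _.
  by apply: contrapT => ny; apply: h; exists y.
pose h (t : R) : V := z + t *: (p - z).
have hc : continuous h.
  move=> t; apply: cvgD; first exact: cvg_cst.
  by apply: cvgZr_tmp; exact: cvg_id.
have A1 : open (h @^-1` G) by apply: open_comp => // t _; exact: hc.
have A2 : closed (h @^-1` G) by apply: preimage_closed => // t _; exact: hc.
have con : connected [set: R].
  by apply/connected_intervalP => x y _ _ w _.
have eq := con (h @^-1` G) _ _ _.
have : (h @^-1` G) 1.
  rewrite eq //.
  - by exists 0; rewrite /h /= scale0r addr0.
  - by exists (h @^-1` G) => //; rewrite setTI.
  - by exists (h @^-1` G) => //; rewrite setTI.
by rewrite /h /= scale1r addrC subrK.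
Qed.

Local Notation ed := Defs.edist.
Lemma b_UB (G : set V) z z' (a : R) : 0 < a ->
  (forall w, bdry G w -> a <= ed z w) ->
  (b_infty G z z' <= (ed z z' / a)%:E)%E.
Proof.
move=> a0 ha; apply: ub_ereal_sup => _ [w hw <-]; rewrite lee_fin.
apply: ler_wpM2l; first exact: enorm_ge0.
have aw := ha w hw.
rewrite lef_pV2 ?posrE //; last by apply: lt_le_trans a0 _; apply: le_trans aw _; by rewrite le_max lexx.
by apply: le_trans aw _; by rewrite le_max lexx.
Qed.
Lemma b_LB (B : set V) y y' w0 (M : R) : bdry B w0 -> 0 < ed y w0 -> ed y w0 <= M ->
  ((ed y y' / (M + ed y y'))%:E <= b_infty B y y')%E.
Proof.
move=> bw p0 pM.
apply: (@le_trans _ _ ((ed y y' / Num.max (ed y w0) (ed y' w0))%:E)); last first.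
  by apply: ereal_sup_ubound; exists w0.
rewrite lee_fin; apply: ler_wpM2l; first exact: enorm_ge0.
have m0 : 0 < Num.max (ed y w0) (ed y' w0) by apply: lt_le_trans p0 _; by rewrite le_max lexx.
rewrite lef_pV2 ?posrE //; last by apply: lt_le_trans m0 _; rewrite ge_max; apply/andP; split;
  [apply: le_trans pM _; rewrite lerDl enorm_ge0|
   apply: le_trans (edist_tri y' y w0) _; rewrite edistC addrC lerD2r].
rewrite ge_max; apply/andP; split.
  by apply: le_trans pM _; rewrite lerDl enorm_ge0.
by apply: le_trans (edist_tri y' y w0) _; rewrite edistC addrC lerD2r.
Qed.
Lemma key (A B : set V) (phi : V -> V) z z' (a K M : R) w0 :
  0 < a -> 0 < K -> (forall w, bdry A w -> a <= ed z w) ->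
  bdry B w0 -> 0 < ed (phi z) w0 -> ed (phi z) w0 <= M ->
  (b_infty B (phi z) (phi z') <= K%:E * b_infty A z z')%E ->
  ed z z' <= a / (2 * K) ->
  ed (phi z) (phi z') <= 2 * K * ed z z' * M / a.
Proof.
move=> a0 K0 ha bw p0 pM H r_le.
have M0 : 0 < M by exact: lt_le_trans p0 pM.
have h1 := b_LB (phi z') bw p0 pM.
have h2 := b_UB z' a0 ha.
have h3 : ((ed (phi z) (phi z') / (M + ed (phi z) (phi z')))%:E <= (K * (ed z z' / a))%:E)%E.
  apply: le_trans h1 _; apply: le_trans H _; rewrite EFinM; apply: lee_wpmul2l => //.
  by rewrite lee_fin ltW.
rewrite lee_fin in h3.
set rho := ed (phi z) (phi z') in h3 *.
set r := ed z z' in h3 r_le *.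
have rho0 : 0 <= rho by exact: enorm_ge0.
have r0 : 0 <= r by exact: enorm_ge0.
rewrite ler_pdivrMr in h3; last by apply: lt_le_trans M0 _; rewrite lerDl.
set s := K * (r / a) in h3.
have s_le : s <= 1 / 2.
  rewrite ler_pdivlMr ?mulr_gt0 // in r_le.
  rewrite /s; have : 0 < a^-1 by rewrite invr_gt0.
  have : a * a^-1 = 1 by rewrite mulfV // gt_eqF.
  nra.
have : rho <= 2 * s * M by nra.
rewrite /s (_ : 2 * (K * (r / a)) * M = 2 * K * r * M / a) //; field.
by rewrite gt_eqF.
Qed.

Lemma loc (A : set V) y : open A -> A y -> (exists w, bdry A w) ->
  exists d : R, exists2 del : R, 0 < del /\ del <= d &
   [/\ (forall w, bdry A w -> d <= ed y w),
       (forall eps : R, 0 < eps -> exists w, bdry A w /\ ed y w <= d + eps),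
       (forall y', ed y y' < del -> A y') &
       (forall w, bdry A w -> 0 < ed y w)].
Proof.
move=> oA Ay [w0 bw0].
have [del del0 hdel] := open_ball_e oA Ay.
have pos w : bdry A w -> 0 < ed y w.
  move=> bw; apply: edist_gt0 => yw; apply: (bdry_notin oA bw); by rewrite -yw.
have far w : bdry A w -> del <= ed y w.
  move=> bw; rewrite leNgt; apply/negP => /hdel; exact: bdry_notin oA bw.
set E := [set ed y w | w in bdry A].
have hi : has_inf E.
  split; first by exists (ed y w0), w0.
  by exists 0 => _ [w _ <-]; exact: enorm_ge0.
exists (inf E); exists del; first split => //.
  by apply: lb_le_inf; [exists (ed y w0), w0 | move=> _ [w bw <-]; exact: far].
split => //.
- by move=> w bw; apply: ge_inf; [exact: hi.2 | exists w].
- move=> eps eps0; have [_ [w bw <-] h] := inf_adherent eps0 hi.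
  by exists w; split => //; exact: ltW.
Qed.
Lemma b_diag (B : set V) y : (b_infty B y y <= 0)%E.
Proof.
apply: ub_ereal_sup => _ [w _ <-]; rewrite lee_fin /Defs.edist subrr.
have -> : enorm (0 : V) = 0.
  by rewrite enormE /sq big1 ?sqrtr0 // => i _; rewrite mxE expr0n.
by rewrite mul0r.
Qed.
Lemma cont_gen (A B : set V) (phi : V -> V) (K : R) : 0 < K ->
  open A -> open B -> (exists w, bdry A w) -> (exists w, bdry B w) ->
  (forall x, A x -> B (phi x)) ->
  (forall x x', A x -> A x' -> (b_infty B (phi x) (phi x') <= K%:E * b_infty A x x')%E) ->
  {within A, continuous phi}.
Proof.
move=> K0 oA oB bA [w0 bw0] AB Hb.
apply/subspace_continuousP => x Ax.
have [a [del [del0 dela] [ha _ hdel _]]] := loc oA Ax bA.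
have a0 : 0 < a by exact: lt_le_trans del0 dela.
have p0 : 0 < ed (phi x) w0.
  apply: edist_gt0 => e; apply: (bdry_notin oB bw0); rewrite -e; exact: AB.
set M := ed (phi x) w0.
apply/cvgrPdist_lt => eps eps0.
set eta := Num.min (a / (2 * K)) (eps * a / (4 * K * M)).
have eta0 : 0 < eta by rewrite lt_min !mulr_gt0 ?invr_gt0 ?mulr_gt0.
rewrite near_withinE; apply/(nbhs_normP (x : V)); exists (eta / (n%:R + 1)).
  by rewrite /= mulr_gt0 // invr_gt0 ltr_wpDl.
move=> t /= ht At; rewrite /from_subspace.
have r_eta : ed x t <= eta.
  apply: le_trans (enorm_le_mx _) _.
  have n0 : (0 : R) <= n%:R by [].
  have : `|x - t| * (n%:R + 1) <= eta.
    by rewrite -ler_pdivlMr ?ltr_wpDl // ltW.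
  have := normr_ge0 (x - t); nra.
have r_le : ed x t <= a / (2 * K) by apply: le_trans r_eta _; rewrite ge_min lexx.
have r_le2 : ed x t <= eps * a / (4 * K * M) by apply: le_trans r_eta _; rewrite ge_min lexx orbT.
have hk := key (phi := phi) a0 K0 ha bw0 p0 (lexx _) (Hb x t Ax At) r_le.
have h1 := edist_le_mx (phi x) (phi t).
suff h2 : 2 * K * ed x t * M / a < eps.
  exact: (le_lt_trans h1 (le_lt_trans hk h2)).
have M0 : 0 < M by [].
have -> : 2 * K * ed x t * M / a = ed x t * (2 * K * M / a) by field; rewrite gt_eqF.
apply: (@le_lt_trans _ _ (eps * a / (4 * K * M) * (2 * K * M / a))).
  by apply: ler_wpM2r => //; rewrite ltW // !mulr_gt0 ?invr_gt0.
have -> : eps * a / (4 * K * M) * (2 * K * M / a) = eps / 2.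
  by field; rewrite !gt_eqF.
lra.
Qed.

Lemma arith_low (r dG dD L rho : R) : 0 < r -> 0 < dG -> 0 < dD -> 0 < L -> 0 <= rho ->
  r <= dG / 4 -> r / (dG + dG / 4 + r) <= L * (rho / dD) ->
  2 / 3 * r * dD / (L * dG) <= rho.
Proof.
move=> r0 g0 d0 L0 p0 rg h.
rewrite ler_pdivrMr in h; last by lra.
set q := rho / dD in h.
have q0 : 0 <= q by rewrite /q divr_ge0 // ltW.
have rhoE : rho = q * dD by rewrite /q mulfVK // gt_eqF.
have h2 : r <= L * q * (3 / 2 * dG) by nra.
rewrite rhoE ler_pdivrMr ?mulr_gt0 //.
have -> : 2 / 3 * r * dD = dD * (2 / 3 * r) by ring.
have -> : q * dD * (L * dG) = dD * (L * q * dG) by ring.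
rewrite ler_pM2l //; nra.
Qed.
Lemma arith_ratio (r dG dD L : R) : 0 < r -> 0 < dG -> 0 < dD -> 0 < L ->
  2 * L * r * (dD + dD / 4) / dG <= 4 * L ^+ 2 * (2 / 3 * r * dD / (L * dG)).
Proof.
move=> r0 g0 d0 L0; set q := L * r * dD / dG.
have q0 : 0 < q by rewrite /q !mulr_gt0 ?invr_gt0.
have -> : 2 * L * r * (dD + dD / 4) / dG = 5 / 2 * q by rewrite /q; field; rewrite gt_eqF.
have -> : 4 * L ^+ 2 * (2 / 3 * r * dD / (L * dG)) = 8 / 3 * q.
  by rewrite /q; field; rewrite !gt_eqF.
lra.
Qed.
Lemma Hf_bound (G D : set V) f (L : R) z : open G -> open D ->
  (exists w, bdry G w) -> (exists w, bdry D w) -> G z ->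
  (forall x, G x -> D (f x)) -> 1 <= L ->
  (forall x x', G x -> G x' -> (b_infty G x x' <= L%:E * b_infty D (f x) (f x'))%E) ->
  (forall x x', G x -> G x' -> (b_infty D (f x) (f x') <= L%:E * b_infty G x x')%E) ->
  (Hf f z <= (4 * L ^+ 2)%:E)%E.
Proof.
move=> oG oD bG bD Gz fGD L1 Hb1 Hb2.
have L0 : 0 < L by lra.
have [dG [del [del0 deldG] [hG adG inG posG]]] := loc oG Gz bG.
have [dD [delD [delD0 delDd] [hD adD _ posD]]] := loc oD (fGD z Gz) bD.
have dG0 : 0 < dG by exact: lt_le_trans del0 deldG.
have dD0 : 0 < dD by exact: lt_le_trans delD0 delDd.
have [w1 [bw1 w1le]] := adD (dD / 4) (divr_gt0 dD0 (ltr0n _ 4)).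
have [w2 [bw2 w2le]] := adG (dG / 4) (divr_gt0 dG0 (ltr0n _ 4)).
set c := del / (4 * L).
have c0 : 0 < c by rewrite /c divr_gt0 // mulr_gt0.
have nr : \forall r \near (0 : R)^'+, 0 < r /\ r < c.
  exact: (filterI (nbhs_right_gt 0) (nbhs_right_lt c0)).
rewrite /Hf limf_esupE.
apply: le_trans (ereal_inf_lbound _) _.
  exists [set r | 0 < r /\ r < c]; [exact: nr | reflexivity].
apply: ub_ereal_sup => _ [r [r0 rc] <-].
have rdel : r * (4 * L) < del by rewrite -ltr_pdivlMr // mulr_gt0.
have r_del : r < del by nra.
have r_le1 : r <= dG / (2 * L).
  rewrite ler_pdivlMr ?mulr_gt0 //; nra.
have r_le2 : r <= dG / 4.
  rewrite ler_pdivlMr //; nra.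
set cu := 2 * L * r * (dD + dD / 4) / dG.
set cl := 2 / 3 * r * dD / (L * dG).
have cl0 : 0 < cl by rewrite /cl !mulr_gt0 ?invr_gt0 ?mulr_gt0.
have hU : (Lf f z r <= cu%:E)%E.
  apply: ub_ereal_sup => _ [z1 /= hz1 <-]; rewrite lee_fin edistC.
  rewrite edistC in hz1.
  have Gz1 : G z1 by apply: inG; rewrite hz1.
  apply: le_trans (key (phi := f) dG0 L0 hG bw1 (posD w1 bw1) w1le (Hb2 z z1 Gz Gz1) _) _.
    by rewrite hz1.
  by rewrite hz1.
have hL : (cl%:E <= lf f z r)%E.
  apply: le_ereal_inf_tmp => _ [z2 /= hz2 <-]; rewrite lee_fin edistC.
  rewrite edistC in hz2.
  have Gz2 : G z2 by apply: inG; rewrite hz2.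
  apply: (arith_low r0 dG0 dD0 L0 (enorm_ge0 _) r_le2).
  rewrite -lee_fin.
  have h1 := b_LB z2 bw2 (posG w2 bw2) w2le.
  rewrite hz2 in h1.
  apply: le_trans h1 _; apply: le_trans (Hb1 z z2 Gz Gz2) _.
  have L0E : (0%:E <= L%:E)%E by rewrite lee_fin ltW.
  rewrite EFinM; apply: (lee_wpmul2l L0E).
  exact: b_UB dD0 hD.
have cu_le := arith_ratio r0 dG0 dD0 L0.
move: hU hL; case: (lf f z r) => [l| |] hU hL.
- rewrite lee_fin in hL.
  have l0 : 0 < l by exact: lt_le_trans cl0 hL.
  rewrite inver gt_eqF //.
  apply: le_trans (lee_wpmul2r _ hU) _; first by rewrite lee_fin ltW // invr_gt0.
  rewrite -EFinM lee_fin ler_pdivrMr //.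
  apply: le_trans cu_le _; rewrite ler_pM2l ?mulr_gt0 ?exprn_gt0 //.
- by rewrite invey mule0 lee_fin mulr_ge0 // sqr_ge0.
- by [].
Qed.
End Norms.

Theorem theorem4p10 (R : realType) (n : nat) (G D : set 'rV[R]_n)
    (f : 'rV[R]_n -> 'rV[R]_n) (L : R) :
  domain G -> G != setT -> domain D -> D != setT ->
  f @` G = D -> 1 <= L ->
  (forall z1 z2, G z1 -> G z2 ->
     (b_infty G z1 z2 / L%:E <= b_infty D (f z1) (f z2))%E /\
     (b_infty D (f z1) (f z2) <= L%:E * b_infty G z1 z2)%E) ->
  quasiconformal f G D /\
  (forall z, G z -> (Hf f z <= (4 * L ^+ 2)%:E)%E).
Proof.
move=> [G0 [oG _]] GT [D0 [oD _]] DT fGD L1 H.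
have bG := bdry_ne oG G0 GT.
have bD := bdry_ne oD D0 DT.
have L0 : 0 < L by lra.
have Hb2 x x' : G x -> G x' ->
    (b_infty D (f x) (f x') <= L%:E * b_infty G x x')%E.
  by move=> Gx Gx'; exact: (H x x' Gx Gx').2.
have Hb1 x x' : G x -> G x' ->
    (b_infty G x x' <= L%:E * b_infty D (f x) (f x'))%E.
  move=> Gx Gx'; have := (H x x' Gx Gx').1.
  by rewrite inver gt_eqF // lee_pdivrMr // muleC.
have fG x : G x -> D (f x) by move=> Gx; rewrite -fGD; exists x.
have HF : forall z, G z -> (Hf f z <= (4 * L ^+ 2)%:E)%E.
  by move=> z Gz; exact: (Hf_bound oG oD bG bD Gz fG L1 Hb1 Hb2).
split => //.
have inj x x' : G x -> G x' -> f x = f x' -> x = x'.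
  move=> Gx Gx' fx; apply: contrapT => ne.
  have [w bw] := bG.
  have p0 : 0 < Defs.edist x w.
    by apply: edist_gt0 => e; apply: (bdry_notin oG bw); rewrite -e.
  have h1 := b_LB x' bw p0 (lexx _).
  have h2 := Hb1 x x' Gx Gx'.
  rewrite -fx in h2.
  have L0E : (0%:E <= L%:E)%E by rewrite lee_fin ltW.
  have h3 := lee_wpmul2l L0E (b_diag D (f x)).
  rewrite mule0 in h3.
  have := le_trans h1 (le_trans h2 h3).
  rewrite lee_fin; apply/negP; rewrite -ltNge.
  have d0 : 0 < Defs.edist x x' by exact: edist_gt0.
  by rewrite divr_gt0 // addr_gt0.
pose g y := xget (0 : 'rV[R]_n) [set x | G x /\ f x = y].
have gP y : D y -> G (g y) /\ f (g y) = y.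
  move=> Dy; suff : [set x | G x /\ f x = y] (g y) by [].
  apply: xgetPex; move: Dy; rewrite -fGD => -[x Gx <-]; by exists x.
have gf x : G x -> g (f x) = x.
  by move=> Gx; have [Gg fg] := gP (f x) (fG x Gx); exact: inj.
split; [split; [|split => //]|].
- exact: (cont_gen L0 oG oD bG bD fG Hb2).
- exists g; split; [|split; [|split]].
  + apply: (cont_gen L0 oD oG bD bG (fun y Dy => (gP y Dy).1)).
    move=> y y' Dy Dy'.
    have [Gy fy] := gP y Dy; have [Gy' fy'] := gP y' Dy'.
    by have := Hb1 _ _ Gy Gy'; rewrite fy fy'.
  + apply/seteqP; split.
      by move=> _ [y Dy <-]; exact: (gP y Dy).1.
    by move=> x Gx; exists (f x); [exact: fG | exact: gf].
  + exact: gf.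
  + by move=> y Dy; exact: (gP y Dy).2.
- by exists (4 * L ^+ 2).
Qed.
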